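(* Any edge-to-edge tiling of the sphere by quadrilaterals in which every vertex has degree $\ge 3$ contains a tile whose four vertices have degrees (in some order) $3,3,3,d$ with $d\ge3$; or $3,3,4,d$ with $4\le d\le 11$; or $3,3,5,d$ with $d\in\{5,6,7\}$; or $3,4,4,d$ with $d\in\{4,5\}$.
   Context: The degree of a vertex is the number of edges (equivalently, tile corners) at that vertex. *)

(* Defs.v *)
From mathcomp Require Import all_boot.
Set Implicit Arguments. Unset Strict Implicit. Unset Printing Implicit Defensive.

(* A tiling of the sphere is encoded combinatorially as a map (rotation system)
   on a finite set of darts T (a dart = a corner/half-edge incidence):
   - [e] is the edge involution (fixed-point free): e x is the other end of
     the edge carrying x;
   - [n] is the node (vertex) rotation, a permutation whose orbits are vertices;
   - the face permutation is [face n e := n \o e]; its orbits are the tiles. *)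

Definition face (T : finType) (n e : T -> T) : T -> T := fun x => n (e x).

Definition map_connected (T : finType) (n e : T -> T) : Prop :=
  forall x y : T, connect [rel a b | (b == n a) || (b == e a)] x y.

Definition spherical (T : finType) (n e : T -> T) : Prop :=
  fcard n T + fcard (face n e) T = fcard e T + 2.

Definition quad_tiling_of_sphere (T : finType) (n e : T -> T) : Prop :=
  [/\ injective n,
      (forall x, e (e x) = x),
      (forall x, e x != x),
      map_connected n e &
      [/\ spherical n e,
      (forall x, order (face n e) x = 4) &
      forall x (i j : nat), i < j < 4 ->
        ~~ fconnect n (iter i (face n e) x) (iter j (face n e) x)]].

Definition vdeg (T : finType) (n : T -> T) (x : T) : nat := order n x.

Definition tile_degrees (T : finType) (n e : T -> T) (x : T) : seq nat :=
  [seq vdeg n (iter i (face n e) x) | i <- iota 0 4].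

(* Main.v *)
Require Import Defs.
From mathcomp Require Import all_boot all_order all_algebra.
From mathcomp Require Import ring lra zify.
Import Order.TTheory GRing.Theory Num.Theory.
Section S.
Local Open Scope ring_scope.
Lemma inv_le {m k : nat} : (0 < m)%N -> (m <= k)%N -> (k%:R^-1 : rat) <= m%:R^-1.
Proof.
move=> m0 mk; rewrite lef_pV2 ?ler_nat // posrE ltr0n //; exact: leq_trans mk.
Qed.

Lemma core (a b c d : nat) : (3 <= a)%N -> (a <= b)%N -> (b <= c)%N -> (c <= d)%N ->
  1 < (a%:R^-1 + b%:R^-1 + c%:R^-1 + d%:R^-1 : rat) ->
  exists d' : nat,
    [\/ perm_eq [:: a; b; c; d] [:: 3; 3; 3; d'] /\ (3 <= d')%N,
        perm_eq [:: a; b; c; d] [:: 3; 3; 4; d'] /\ (4 <= d' <= 11)%N,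
        perm_eq [:: a; b; c; d] [:: 3; 3; 5; d'] /\ d' \in [:: 5; 6; 7]
      | perm_eq [:: a; b; c; d] [:: 3; 4; 4; d'] /\ d' \in [:: 4; 5]].
Proof.
move=> a3 ab bc cd H.
have a0 : (0 < a)%N by lia.
have b0 : (0 < b)%N by lia.
have c0 : (0 < c)%N by lia.
have ha := inv_le (isT : (0 < 3)%N) a3.
have hb := inv_le a0 ab.
have hc := inv_le b0 bc.
have hd := inv_le c0 cd.
have [a4|] := leqP 4 a.
  have := inv_le (isT : (0 < 4)%N) a4; lra.
rewrite ltnS => a3'; have {a3'}Ea : a = 3%N by apply/eqP; rewrite eqn_leq a3' a3.
subst a.
have [b5|] := leqP 5 b.
  have := inv_le (isT : (0 < 5)%N) b5; lra.
rewrite ltnS => b4.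
have : b = 3%N \/ b = 4%N by lia.
case=> ?; subst b.
- have [c6|] := leqP 6 c.
    have := inv_le (isT : (0 < 6)%N) c6; lra.
  rewrite ltnS => c5.
  have : c = 3%N \/ c = 4%N \/ c = 5%N by lia.
  case=> [?|[?|?]]; subst c.
  + by exists d; apply: Or41.
  + have [d12|] := leqP 12 d.
      have := inv_le (isT : (0 < 12)%N) d12; lra.
    rewrite ltnS => d11; exists d; apply: Or42; split=> //; by rewrite cd d11.
  + have [d8|] := leqP 8 d.
      have := inv_le (isT : (0 < 8)%N) d8; lra.
    rewrite ltnS => d7; exists d; apply: Or43; split=> //.
    have : d = 5%N \/ d = 6%N \/ d = 7%N by lia.
    by case=> [->|[->|->]].
- have [c5|] := leqP 5 c.
    have := inv_le (isT : (0 < 5)%N) c5; lra.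
  rewrite ltnS => c4.
  have ? : c = 4%N by lia.
  subst c.
  have [d6|] := leqP 6 d.
    have := inv_le (isT : (0 < 6)%N) d6; lra.
  rewrite ltnS => d5; exists d; apply: Or44; split=> //.
  have : d = 4%N \/ d = 5%N by lia.
  by case=> ->.
Qed.

Lemma sum_inv_order (T : finType) (f : T -> T) : injective f ->
  \sum_(x : T) ((order f x)%:R^-1 : rat) = (fcard f T)%:R.
Proof.
move=> injf.
have symf : connect_sym (frel f) := fconnect_sym injf.
rewrite (partition_big (froot f) (froots f)) /=; last by move=> x _; exact: roots_root.
rewrite (eq_bigr (fun _ => 1)).
  rewrite sumr_const /n_comp_mem; congr (_%:R); apply: eq_card => x.
  by rewrite !inE andbT.
move=> r /eqP rr.
have ord_eq : forall x, fconnect f r x -> order f x = order f r.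
  move=> x rx; rewrite /order; apply: eq_card => y.
  by rewrite -!topredE /= (same_connect symf rx).
rewrite (eq_bigr (fun _ => (order f r)%:R^-1)); last first.
  move=> x; rewrite /= => /eqP xr; rewrite ord_eq //; rewrite symf -(root_connect symf) xr rr.
  by [].
rewrite sumr_const.
have -> : #|[pred x | true && (froot f x == r)]| = order f r.
  rewrite /order; apply: eq_card => x; rewrite !inE /= symf -(root_connect symf) rr.
  by [].
have o0 : (order f r)%:R != 0 :> rat by rewrite pnatr_eq0 -lt0n order_gt0.
by rewrite -[_ *+ order f r]mulr_natr mulVf.
Qed.
Lemma iter_inj (T : Type) (f : T -> T) i : injective f -> injective (iter i f).
Proof.
move=> fi; elim: i => [|i IH] x y //= /fi; exact: IH.
Qed.

Lemma final (d0 d1 d2 d3 : nat) : (3 <= d0)%N -> (3 <= d1)%N -> (3 <= d2)%N -> (3 <= d3)%N ->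
  0 < (d0%:R^-1 - 4%:R^-1) + ((d1%:R^-1 - 4%:R^-1) + ((d2%:R^-1 - 4%:R^-1) + ((d3%:R^-1 - 4%:R^-1) + 0)) :> rat) ->
  exists d : nat,
    [\/ perm_eq [:: d0; d1; d2; d3] [:: 3%N; 3%N; 3%N; d] /\ (3 <= d)%N,
        perm_eq [:: d0; d1; d2; d3] [:: 3%N; 3%N; 4%N; d] /\ (4 <= d <= 11)%N,
        perm_eq [:: d0; d1; d2; d3] [:: 3%N; 3%N; 5%N; d] /\ d \in [:: 5%N; 6%N; 7%N]
      | perm_eq [:: d0; d1; d2; d3] [:: 3%N; 4%N; 4%N; d] /\ d \in [:: 4%N; 5%N]].
Proof.
move=> h0 h1 h2 h3 H.
set s := [:: d0; d1; d2; d3].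
have Hs : 1 < \sum_(k <- s) (k%:R^-1 : rat) by rewrite !big_cons big_nil; lra.
have all3 : all (fun k => 3 <= k)%N s by rewrite /= h0 h1 h2 h3.
rewrite -(perm_big _ (permEl (perm_sort leq s))) in Hs.
suff [d Hd] : exists d : nat,
    [\/ perm_eq (sort leq s) [:: 3%N; 3%N; 3%N; d] /\ (3 <= d)%N,
        perm_eq (sort leq s) [:: 3%N; 3%N; 4%N; d] /\ (4 <= d <= 11)%N,
        perm_eq (sort leq s) [:: 3%N; 3%N; 5%N; d] /\ d \in [:: 5%N; 6%N; 7%N]
      | perm_eq (sort leq s) [:: 3%N; 4%N; 4%N; d] /\ d \in [:: 4%N; 5%N]].
  by exists d; rewrite -!(perm_sort leq s).
have srt := sort_sorted leq_total s.
have sz : size (sort leq s) = 4%N by rewrite size_sort.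
have all3' : all (fun k => 3 <= k)%N (sort leq s) by rewrite all_sort.
move: (sort leq s) Hs srt sz all3' => t.
case: t => [|a [|b [|c [|d [|]]]]] //= Hs /and4P[ab bc cd _] _ /and5P[a3 _ _ _ _].
rewrite !big_cons big_nil addr0 !addrA in Hs.
exact: core.
Qed.

Lemma lemma1_aux (T : finType) (n e : T -> T) :
  quad_tiling_of_sphere n e ->
  (forall x : T, (3 <= vdeg n x)%N) ->
  exists (x : T) (d : nat),
    [\/ perm_eq (tile_degrees n e x) [:: 3%N; 3%N; 3%N; d] /\ (3 <= d)%N,
        perm_eq (tile_degrees n e x) [:: 3%N; 3%N; 4%N; d] /\ (4 <= d <= 11)%N,
        perm_eq (tile_degrees n e x) [:: 3%N; 3%N; 5%N; d] /\ d \in [:: 5%N; 6%N; 7%N]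
      | perm_eq (tile_degrees n e x) [:: 3%N; 4%N; 4%N; d] /\ d \in [:: 4%N; 5%N]].
Proof.
case=> injn ee ene _ [sph ord4 _] deg3.
have eK : cancel e e := ee.
have einj : injective e := can_inj eK.
have finj : injective (face n e) by move=> x y /injn /einj.
have ord2 : forall x, order e x = 2.
  move=> x; apply: (@order_cycle _ e [:: x; e x]) => //=.
  - by rewrite ee !eqxx.
  - by rewrite andbT inE eq_sym ene.
  - by rewrite inE eqxx.
pose G x : rat := ((vdeg n x)%:R^-1 - 4%:R^-1)%R.
have sumG : \sum_x G x = 2.
  have hF : (fcard (face n e) T)%:R = \sum_(x : T) (4%:R^-1 : rat).
    by rewrite -sum_inv_order //; apply: eq_bigr => x _; rewrite ord4.
  have hE : (fcard e T)%:R = \sum_(x : T) (2%:R^-1 : rat).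
    by rewrite -sum_inv_order //; apply: eq_bigr => x _; rewrite ord2.
  have hV : (fcard n T)%:R = \sum_(x : T) ((vdeg n x)%:R^-1 : rat).
    by rewrite -sum_inv_order.
  have : ((fcard n T + fcard (face n e) T)%N%:R : rat) = ((fcard e T + 2)%N)%:R.
    by move: sph; rewrite /spherical => ->.
  rewrite !natrD hF hE hV /G sumrB !sumr_const -[4%:R^-1 *+ _]mulr_natr -[2%:R^-1 *+ _]mulr_natr => h; lra.
have sum4 : \sum_x \sum_(i < 4) G (iter i (face n e) x) = 8.
  rewrite exchange_big /=.
  rewrite (eq_bigr (fun _ => 2%R)); last first.
    move=> i _; rewrite -sumG; symmetry; apply: (reindex_inj (h := iter i (face n e))); exact: iter_inj.
  by rewrite sumr_const card_ord.
have [x Hx] : exists x, (0 < \sum_(i < 4) G (iter i (face n e) x))%R.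
  case: (pickP (fun x => (0 < \sum_(i < 4) G (iter i (face n e) x))%R)) => [x Hx|H0].
    by exists x.
  have : \sum_x \sum_(i < 4) G (iter i (face n e) x) <= \sum_(x : T) (0 : rat).
    by apply: ler_sum => y _; rewrite leNgt H0.
  rewrite sum4 big1_eq => h; lra.
exists x.
rewrite !big_ord_recl big_ord0 /= in Hx.
rewrite (_ : tile_degrees n e x = [:: vdeg n x; vdeg n (face n e x); vdeg n (face n e (face n e x)); vdeg n (face n e (face n e (face n e x)))]) //.
apply: final => //.
Qed.
End S.

Theorem lemma1 (T : finType) (n e : T -> T) :
  quad_tiling_of_sphere n e ->
  (forall x : T, 3 <= vdeg n x) ->
  exists (x : T) (d : nat),
    [\/ perm_eq (tile_degrees n e x) [:: 3; 3; 3; d] /\ 3 <= d,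
        perm_eq (tile_degrees n e x) [:: 3; 3; 4; d] /\ 4 <= d <= 11,
        perm_eq (tile_degrees n e x) [:: 3; 3; 5; d] /\ d \in [:: 5; 6; 7]
      | perm_eq (tile_degrees n e x) [:: 3; 4; 4; d] /\ d \in [:: 4; 5]].
Proof. exact: lemma1_aux. Qed.
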